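(* Let $\widehat{\mathcal T}_\bullet$ be an admissible hierarchical mesh and $\widehat{\mathcal M}_\bullet=\{\widehat T_1,\dots,\widehat T_n\}\subseteq\widehat{\mathcal T}_\bullet$. Then $${\tt refine}(\widehat{\mathcal T}_\bullet,\widehat{\mathcal M}_\bullet)={\tt refine}\big({\tt refine}(\cdots{\tt refine}(\widehat{\mathcal T}_\bullet,\{\widehat T_1\})\cdots,\{\widehat T_{n-1}\}),\{\widehat T_n\}\big),$$ with the convention ${\tt refine}(\widehat{\mathcal T},\widehat{\mathcal M}):={\tt refine}(\widehat{\mathcal T},\widehat{\mathcal M}\cap\widehat{\mathcal T})$ for arbitrary sets $\widehat{\mathcal M}$ (so ${\tt refine}(\widehat{\mathcal T},\emptyset)=\widehat{\mathcal T}$).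
   Context: Parameter domain $\widehat\Omega=(0,1)^d$, $d\ge2$; degrees $p_1,\dots,p_d\ge1$. For each $i$, $\widehat{\mathcal K}^0_i$ is a $p_i$-open knot vector in $[0,1]$ (first $p_i+1$ knots $0$, last $p_i+1$ knots $1$, interior multiplicities $\le p_i$); $\widehat{\mathcal K}^{k+1}_i$ arises from $\widehat{\mathcal K}^k_i$ by inserting each nondegenerate span's midpoint once. $\widehat{\mathcal B}^k$: tensor-product B-splines of degree $(p_1,\dots,p_d)$ for $\widehat{\mathcal K}^k$; $\widehat{\mathcal T}^k$: closed cells of level $k$. A hierarchical mesh is given by closed sets $[0,1]^d=\widehat\Omega^0_\bullet\supseteq\widehat\Omega^1_\bullet\supseteq\cdots$, each $\widehat\Omega^k_\bullet$ ($k\ge1$) a union of cells of $\widehat{\mathcal T}^{k-1}$, eventually empty; mesh $\widehat{\mathcal T}_\bullet=\bigcup_k\{\widehat T\in\widehat{\mathcal T}^k:\widehat T\subseteq\widehat\Omega^k_\bullet,\widehat T\not\subseteq\widehat\Omega^{k+1}_\bullet\}$, ${\rm level}(\widehat T)=k$; hierarchical basis $\widehat{\mathcal H}_\bullet=\bigcup_k\{\widehat\beta\in\widehat{\mathcal B}^k:{\rm supp}\,\widehat\beta\subseteq\widehat\Omega^k_\bullet,{\rm supp}\,\widehat\beta\not\subseteq\widehat\Omega^{k+1}_\bullet\}$. Neighbors $\mathcal N_\bullet(\widehat T)=\{\widehat T'\in\widehat{\mathcal T}_\bullet:\exists\widehat\beta\in\widehat{\mathcal H}_\bullet,\widehat T,\widehat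 T'\subseteq{\rm supp}\,\widehat\beta\}$; bad neighbors $\mathcal N^{\rm bad}_\bullet(\widehat T)=\{\widehat T'\in\mathcal N_\bullet(\widehat T):{\rm level}(\widehat T')={\rm level}(\widehat T)-1\}$. Admissible: $|{\rm level}(\widehat T)-{\rm level}(\widehat T')|\le1$ whenever $\widehat T'\in\mathcal N_\bullet(\widehat T)$. ${\tt refine}(\widehat{\mathcal T}_\bullet,\widehat{\mathcal M})$ for $\widehat{\mathcal M}\subseteq\widehat{\mathcal T}_\bullet$: $\widehat{\mathcal M}^{(0)}=\widehat{\mathcal M}$, $\widehat{\mathcal M}^{(i+1)}=\widehat{\mathcal M}^{(i)}\cup\bigcup_{\widehat T\in\widehat{\mathcal M}^{(i)}}\mathcal N^{\rm bad}_\bullet(\widehat T)$ until stationary; each $\widehat T$ in the final set is added to $\widehat\Omega^{{\rm level}(\widehat T)+1}$, giving the new mesh. *)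

(* Defs.v *)
From HB Require Import structures.
From mathcomp Require Import all_boot all_order all_algebra.
Set Implicit Arguments. Unset Strict Implicit. Unset Printing Implicit Defensive.
Import Order.TTheory GRing.Theory Num.Theory.
Local Open Scope ring_scope.

Section Hier.
Variables (R : realFieldType) (d : nat) (p : 'I_d -> nat) (K0 : 'I_d -> seq R).

Definition open_knots (q : nat) (t : seq R) : Prop :=
  [/\ sorted <=%R t, (2 * q.+1 <= size t)%N,
      take q.+1 t = nseq q.+1 0, drop (size t - q.+1) t = nseq q.+1 1
    & forall v : R, 0 < v < 1 -> (count_mem v t <= q)%N].

Fixpoint ins_mid (t : seq R) : seq R :=
  match t with
  | a :: t' =>
      match t' with
      | b :: _ => if a < b then a :: (a + b) / 2%:R :: ins_mid t'
                  else a :: ins_mid t'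
      | [::] => [:: a]
      end
  | [::] => [::]
  end.

Definition knots (k : nat) (i : 'I_d) : seq R := iter k ins_mid (K0 i).

Definition pt := 'I_d -> R.
Definition region := pt -> Prop.
(* a hierarchy: k |-> Omega^k (as a point set) *)
Definition hier := nat -> region.

(* cells and B-splines are indexed by (level k, multi-index j) *)
Definition cell := (nat * {ffun 'I_d -> nat})%type.

Definition in_box (lo hi : pt) : region := fun x => forall i, lo i <= x i <= hi i.
Definition subr (A B : region) : Prop := forall x, A x -> B x.

Definition is_cell (c : cell) : Prop :=
  forall i, ((c.2 i).+1 < size (knots c.1 i))%N /\
            nth 0 (knots c.1 i) (c.2 i) < nth 0 (knots c.1 i) (c.2 i).+1.
Definition cell_box (c : cell) : region :=
  in_box (fun i => nth 0 (knots c.1 i) (c.2 i))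
         (fun i => nth 0 (knots c.1 i) (c.2 i).+1).

Definition is_bspl (b : cell) : Prop :=
  forall i, ((b.2 i + p i).+1 < size (knots b.1 i))%N.
Definition supp_box (b : cell) : region :=
  in_box (fun i => nth 0 (knots b.1 i) (b.2 i))
         (fun i => nth 0 (knots b.1 i) (b.2 i + p i).+1).

Definition hier_mesh (O : hier) : Prop :=
  [/\ forall x, O 0%N x <-> (forall i, 0 <= x i <= 1),
      forall k x, O k.+1 x -> O k x,
      forall k, exists cs : seq cell,
        (forall c, c \in cs -> is_cell c /\ c.1 = k) /\
        (forall x, O k.+1 x <-> exists2 c, c \in cs & cell_box c x)
    & exists N, forall k x, (N <= k)%N -> ~ O k x].

Definition in_mesh (O : hier) (c : cell) : Prop :=
  [/\ is_cell c, subr (cell_box c) (O c.1) & ~ subr (cell_box c) (O c.1.+1)].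

Definition in_basis (O : hier) (b : cell) : Prop :=
  [/\ is_bspl b, subr (supp_box b) (O b.1) & ~ subr (supp_box b) (O b.1.+1)].

Definition neighbor (O : hier) (c c' : cell) : Prop :=
  in_mesh O c' /\ exists b, [/\ in_basis O b, subr (cell_box c) (supp_box b)
                                & subr (cell_box c') (supp_box b)].

Definition bad_neighbor (O : hier) (c c' : cell) : Prop :=
  neighbor O c c' /\ c'.1.+1 = c.1.

Definition admissible (O : hier) : Prop :=
  forall c c', in_mesh O c -> neighbor O c c' ->
    (c.1 <= c'.1 + 1)%N /\ (c'.1 <= c.1 + 1)%N.

(* the iterates M^(i) of the marking loop *)
Fixpoint marks (O : hier) (M : cell -> Prop) (n : nat) : cell -> Prop :=
  match n with
  | 0 => M
  | n.+1 => fun c => marks O M n c \/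
                     exists2 c0, marks O M n c0 & bad_neighbor O c0 c
  end.

(* refine(T, M) with the convention refine(T,M) := refine(T, M \cap T);
   the final (stationary) marked set is the union of all iterates *)
Definition refine (O : hier) (M : cell -> Prop) : hier :=
  fun k x => O k x \/
    exists c, [/\ exists n, marks O (fun c => M c /\ in_mesh O c) n c,
                  c.1.+1 = k & cell_box c x].

Definition refine_seq (O : hier) (Ms : seq cell) : hier :=
  foldl (fun O' c => refine O' (fun c' => c' = c)) O Ms.

End Hier.

(* Main.v *)
Require Import Defs.
From HB Require Import structures.
From mathcomp Require Import all_boot all_order all_algebra.
From mathcomp Require Import zify ring lra.
From Stdlib Require Import Classical.
Import Order.TTheory GRing.Theory Num.Theory.
Set Implicit Arguments. Unset Strict Implicit. Unset Printing Implicit Defensive.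
Local Open Scope ring_scope.

Section Knots1.
Variable R : realFieldType.

Lemma ins_mid_cons (a : R) t : exists l, ins_mid (a :: t) = a :: l.
Proof. by case: t => [|b t] /=; [exists [::] | case: ifP => _; eexists]. Qed.

Lemma ins_mid2 (a b : R) t : ins_mid [:: a, b & t] =
  if a < b then a :: (a + b) / 2%:R :: ins_mid (b :: t) else a :: ins_mid (b :: t).
Proof. by []. Qed.

Lemma sorted_ins_mid (t : seq R) : sorted <=%R t -> sorted <=%R (ins_mid t).
Proof.
elim: t => [|a t IH]; first by [].
case: t IH => [|b t] IH; first by [].
move=> /andP[hab hs]; rewrite ins_mid2.
have := IH hs; have [l el] := ins_mid_cons b t; rewrite el.
case: ifP => hlt Hl /=.
- move: Hl => /= ->; rewrite andbT; apply/andP; split; lra.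
- by move: Hl => /= ->; rewrite hab.
Qed.

Lemma all01_ins_mid (t : seq R) : all (fun v => 0 <= v <= 1) t ->
  all (fun v => 0 <= v <= 1) (ins_mid t).
Proof.
elim: t => [|a t IH]; first by [].
case: t IH => [|b t] IH; first by [].
move=> /andP[ha hs]; rewrite ins_mid2.
have := IH hs; have [l el] := ins_mid_cons b t; rewrite el.
move: hs => /= /andP[hb _].
case: ifP => hlt Hl /=.
- rewrite ha Hl andbT /=; move/andP: ha => [? ?]; move/andP: hb => [? ?].
  apply/andP; split; lra.
- by move: Hl => /= ->; rewrite ha.
Qed.

Lemma size_ins_mid (t : seq R) : (size t <= size (ins_mid t))%N.
Proof.
elim: t => [|a t IH]; first by [].
case: t IH => [|b t] IH; first by [].
rewrite ins_mid2; have [l el] := ins_mid_cons b t; rewrite el in IH *.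
by move: IH => /= IH; case: ifP => _ /=; lia.
Qed.

Lemma pos_ex (t : seq R) : (0 < size t)%N -> exists pi : nat -> nat,
  [/\ (forall i, (i.+1 < size t)%N -> (pi i < pi i.+1)%N),
      (forall i, (i < size t)%N -> (pi i < size (ins_mid t))%N /\
                  nth 0 (ins_mid t) (pi i) = nth 0 t i),
      (forall j, (j < size (ins_mid t))%N -> exists2 i, (i < size t)%N &
                  (pi i <= j)%N /\ ((i.+1 < size t)%N -> (j < pi i.+1)%N)),
      pi 0%N = 0%N & size (ins_mid t) = (pi (size t).-1).+1].
Proof.
elim: t => [|a t IH]; first by [].
move=> _; case: t IH => [|b t] IH.
  exists (fun _ => 0%N); split => //=.
  - by move=> i; rewrite ltnS leqn0 => /eqP ->.
  - by move=> j; rewrite ltnS leqn0 => /eqP ->; exists 0%N.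
have [pi' [P1 P2 P3 P4 P5]] := IH isT.
set s' := ins_mid (b :: t) in P2 P3 P5 *.
pose dl := if a < b then 2%N else 1%N.
have [E1 E2] : (forall k, nth 0 (ins_mid [:: a, b & t]) (dl + k) = nth 0 s' k) /\
              size (ins_mid [:: a, b & t]) = (dl + size s')%N.
  by rewrite /= /dl; case: ifP.
have E0 : nth 0 (ins_mid [:: a, b & t]) 0 = a by rewrite /=; case: ifP.
have dlpos : (1 <= dl <= 2)%N by rewrite /dl; case: ifP.
move: (ins_mid [:: a, b & t]) E0 E1 E2 => S E0 E1 E2.
exists (fun i => if i is i'.+1 then (dl + pi' i')%N else 0%N); split => //.
- case=> [|i] /= Hi; first lia.
  have := P1 i Hi; lia.
- case=> [|i] /= Hi; first by rewrite E2 E0; split => //; lia.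
  have [H1 H2] := P2 i Hi; rewrite E1 H2 E2; split => //; lia.
- move=> j; rewrite E2 => Hj.
  case: (ltnP j dl) => hj.
    exists 0%N => //; split => // _; lia.
  have [i Hi [H1 H2]] := P3 (j - dl)%N ltac:(lia).
  exists i.+1 => //; split; first lia.
  move=> Hi'; have := H2 Hi'; lia.
- rewrite E2 P5 /=; lia.
Qed.

Lemma pi_mono (t : seq R) (pi : nat -> nat) :
  (forall i, (i.+1 < size t)%N -> (pi i < pi i.+1)%N) ->
  forall i r, (i + r < size t)%N -> (pi i + r <= pi (i + r))%N.
Proof.
move=> P1 i; elim=> [|r IH] Hr; first by rewrite !addn0.
have h1 : (i + r < size t)%N by clear -Hr; lia.
have := IH h1; have := P1 (i + r)%N ltac:(by clear -Hr; lia).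
rewrite !addnS; lia.
Qed.

Lemma sorted_nth_le (t : seq R) i j : sorted <=%R t -> (i <= j)%N -> (j < size t)%N ->
  nth 0 t i <= nth 0 t j.
Proof.
move=> st hij hj; apply: (sorted_leq_nth le_trans lexx) => //; rewrite inE /=; lia.
Qed.

Lemma anc1 (t : seq R) (q j : nat) : sorted <=%R t -> (q.+2 <= size t)%N ->
  ((j + q).+1 < size (ins_mid t))%N ->
  exists m, [/\ ((m + q).+1 < size t)%N, nth 0 t m <= nth 0 (ins_mid t) j
             & nth 0 (ins_mid t) (j + q).+1 <= nth 0 t (m + q).+1].
Proof.
move=> st hq hj.
have ss := sorted_ins_mid st.
have [pi [P1 P2 P3 P4 P5]] := pos_ex (t:=t) ltac:(lia).
have [i Hi [H1 H2]] := P3 j ltac:(lia).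
case: (ltnP (i + q).+1 (size t)) => hiq.
  exists i; split => //.
  - have [_ <-] := P2 i Hi; apply: sorted_nth_le => //; lia.
  - have [H3 <-] := P2 (i + q).+1 hiq.
    have := pi_mono P1 (i := i.+1) (r := q) ltac:(lia).
    have := H2 ltac:(lia).
    rewrite addSn => ha hb; apply: sorted_nth_le => //; lia.
exists (size t - q.+2)%N; split; first lia.
- apply: le_trans (_ : nth 0 t i <= _).
    by apply: sorted_nth_le => //; lia.
  have [_ <-] := P2 i Hi; apply: sorted_nth_le => //; lia.
- have -> : ((size t - q.+2) + q).+1 = (size t).-1 by lia.
  have [_ <-] := P2 (size t).-1 ltac:(lia).
  apply: sorted_nth_le => //; lia.
Qed.

Lemma span_ex (t : seq R) a b v : sorted <=%R t -> (b < size t)%N -> (a < b)%N ->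
  nth 0 t a < nth 0 t b -> nth 0 t a <= v <= nth 0 t b ->
  exists m, [/\ (a <= m)%N, (m < b)%N, nth 0 t m < nth 0 t m.+1
              & nth 0 t m <= v <= nth 0 t m.+1].
Proof.
move=> st; elim: b => [|b IH] // hb hab hlt /andP[hav hvb].
have hbb : nth 0 t b <= nth 0 t b.+1 by apply: sorted_nth_le.
case: (lerP (nth 0 t b) v) => hbv.
  case: (ltrP (nth 0 t b) (nth 0 t b.+1)) => hlt2.
    by exists b; split; rewrite ?hbv ?hvb //; lia.
  have eqb : nth 0 t b = nth 0 t b.+1 by apply/eqP; rewrite eq_le hbb hlt2.
  have hab' : (a < b)%N.
    rewrite ltn_neqAle -ltnS hab andbT; apply/eqP => E; subst a.
    by move: hlt; rewrite eqb ltxx.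
  have [m [h1 h2 h3 h4]] := IH ltac:(lia) hab' ltac:(by rewrite eqb) ltac:(by rewrite hav eqb).
  exists m; split => //; lia.
have hab' : (a < b)%N.
  rewrite ltn_neqAle -ltnS hab andbT; apply/eqP => E; subst a.
  by move: hbv; rewrite ltNge hav.
have hlt' : nth 0 t a < nth 0 t b by apply: le_lt_trans hbv.
have [m [h1 h2 h3 h4]] := IH ltac:(lia) hab' hlt' ltac:(by rewrite hav ltW).
exists m; split => //; lia.
Qed.

End Knots1.

Section Geo.
Variables (R : realFieldType) (d : nat) (p : 'I_d -> nat) (K0 : 'I_d -> seq R).
Hypothesis hK : forall i, open_knots (p i) (K0 i).

Lemma knotsS k i : knots K0 k.+1 i = ins_mid (knots K0 k i). Proof. by []. Qed.

Lemma knots_sorted k i : sorted <=%R (knots K0 k i).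
Proof. elim: k => [|k IH]; [by case: (hK i) | exact: sorted_ins_mid]. Qed.

Lemma knots_size k i : ((p i).+2 <= size (knots K0 k i))%N.
Proof.
elim: k => [|k IH]; first by case: (hK i) => _ h _ _ _; rewrite /knots /=; lia.
exact: leq_trans IH (size_ins_mid _).
Qed.

Lemma K0_01 i : all (fun v => 0 <= v <= 1) (K0 i).
Proof.
case: (hK i) => st hs htk hdr _.
set t := K0 i in st hs htk hdr *; clearbody t.
have h0 : nth 0 t 0 = 0.
  by have := congr1 (fun s => nth 0 s 0) htk; rewrite /= nth_take.
have h1 : nth 0 t (size t).-1 = 1.
  move: (congr1 (fun s => nth 0 s (p i)) hdr); rewrite nth_drop nth_nseq ltnSn.
  by have -> : (size t - (p i).+1 + p i = (size t).-1)%N by lia.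
apply/(all_nthP 0) => j hj.
have H0 := sorted_nth_le (i:=0%N) (j:=j) st (leq0n j) hj; rewrite h0 in H0.
have hj' : (j < size t)%N := hj.
have H1 := sorted_nth_le (i:=j) (j:=(size t).-1) st ltac:(clear -hj'; lia) ltac:(clear -hj'; lia); rewrite h1 in H1.
by rewrite H0 H1.
Qed.

Lemma knots_01 k i j : (j < size (knots K0 k i))%N -> 0 <= nth 0 (knots K0 k i) j <= 1.
Proof.
have : all (fun v => 0 <= v <= 1) (knots K0 k i).
  elim: k => [|k IH]; [exact: K0_01 | exact: all01_ins_mid].
by move/(all_nthP 0); apply.
Qed.

Definition lo (c : cell d) : pt R d := fun i => nth 0 (knots K0 c.1 i) (c.2 i).
Definition hi (c : cell d) : pt R d := fun i => nth 0 (knots K0 c.1 i) (c.2 i).+1.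
Definition ctr (c : cell d) : pt R d := fun i => (lo c i + hi c i) / 2%:R.

Lemma ctr_in c : is_cell K0 c -> cell_box K0 c (ctr c).
Proof.
move=> hc i; have [_ h] := hc i; rewrite /ctr /lo /hi.
apply/andP; split; lra.
Qed.

Lemma lo_in c : is_cell K0 c -> cell_box K0 c (lo c).
Proof. by move=> hc i; have [_ h] := hc i; rewrite /lo lexx ltW. Qed.

Lemma hi_in c : is_cell K0 c -> cell_box K0 c (hi c).
Proof. by move=> hc i; have [_ h] := hc i; rewrite /hi lexx ltW. Qed.

Lemma midL1 (a b c : R) : a < b -> b <= c -> c <= (a + b) / 2%:R -> False.
Proof. move=> *; lra. Qed.
Lemma midL2 (a b c : R) : a < b -> (a + b) / 2%:R <= c -> c <= a -> False.
Proof. move=> *; lra. Qed.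

Lemma cell_eq c c' : is_cell K0 c -> is_cell K0 c' -> c.1 = c'.1 ->
  cell_box K0 c' (ctr c) -> c = c'.
Proof.
case: c => k f; case: c' => k' f' /= hc hc' ek hb; subst k'.
congr pair; apply/ffunP => i.
have [s1 l1] := hc i; have [s2 l2] := hc' i; have /andP[b1 b2] := hb i.
move: b1 b2; rewrite /ctr /lo /hi /= => b1 b2.
have st := knots_sorted k i.
case: (ltngtP (f i) (f' i)) => // h.
- have H := sorted_nth_le (i := (f i).+1) (j := f' i) st h ltac:(by simpl in *; lia).
  by case: (midL1 l1 H b1).
- have H := sorted_nth_le (i := (f' i).+1) (j := f i) st h ltac:(by simpl in *; lia).
  by case: (midL2 l1 b2 H).
Qed.

Lemma anc_bspl l (B : cell d) : is_bspl p K0 B -> B.1 = l.+1 ->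
  exists A : cell d, [/\ A.1 = l, is_bspl p K0 A & subr (supp_box p K0 B) (supp_box p K0 A)].
Proof.
case: B => k f /= hB ek; subst k.
have H : forall i, exists m, [/\ ((m + p i).+1 < size (knots K0 l i))%N,
   nth 0 (knots K0 l i) m <= nth 0 (knots K0 l.+1 i) (f i)
   & nth 0 (knots K0 l.+1 i) (f i + p i).+1 <= nth 0 (knots K0 l i) (m + p i).+1].
  move=> i; apply: anc1; [exact: knots_sorted | exact: knots_size | exact: (hB i)].
have [g Hg] := fin_all_exists H.
exists (l, [ffun i => g i]); split => //.
- by move=> i /=; rewrite ffunE; case: (Hg i).
- move=> x hx i; rewrite /= ffunE; have [_ h1 h2] := Hg i.
  move: (hx i) => /= /andP[x1 x2].
  apply/andP; split; [exact: le_trans h1 x1 | exact: le_trans x2 h2].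
Qed.

Lemma cell_in_supp (O : hier R d) (B n : cell d) : is_bspl p K0 B -> is_cell K0 n ->
  subr (cell_box K0 n) (supp_box p K0 B) ->
  subr (supp_box p K0 B) (O B.1) -> ~ subr (supp_box p K0 B) (O B.1.+1) ->
  exists c : cell d, [/\ in_mesh K0 O c, c.1 = B.1 & subr (cell_box K0 c) (supp_box p K0 B)].
Proof.
move=> hB hn hnB hBO hBO1.
have [x [hx hxO]] : exists x, supp_box p K0 B x /\ ~ O B.1.+1 x.
  apply: NNPP => hne; apply: hBO1 => x hx; apply: NNPP => hO; apply: hne; by exists x.
have H : forall i, exists m, [/\ (B.2 i <= m)%N, (m < (B.2 i + p i).+1)%N,
    nth 0 (knots K0 B.1 i) m < nth 0 (knots K0 B.1 i) m.+1
  & nth 0 (knots K0 B.1 i) m <= x i <= nth 0 (knots K0 B.1 i) m.+1].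
  move=> i.
  have /andP[l1 _] := hnB _ (lo_in hn) i.
  have /andP[_ h2] := hnB _ (hi_in hn) i.
  have [_ lh] := hn i.
  apply: span_ex.
  - exact: knots_sorted.
  - exact: hB i.
  - by rewrite ltnS leq_addr.
  - exact: le_lt_trans l1 (lt_le_trans lh h2).
  - exact: hx i.
have [g Hg] := fin_all_exists H.
have hcB : subr (cell_box K0 (B.1, [ffun i => g i])) (supp_box p K0 B).
  move=> y hy i; move: (hy i); rewrite /= ffunE => /andP[y1 y2].
  have [h1 h2 _ _] := Hg i.
  have hBs := hB i.
  apply/andP; split.
  - apply: le_trans y1; apply: sorted_nth_le => //; [exact: knots_sorted | lia].
  - apply: le_trans y2 _; apply: sorted_nth_le => //; exact: knots_sorted.
exists (B.1, [ffun i => g i]); split => //; split.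
- move=> i /=; rewrite ffunE; have [_ h2 h3 _] := Hg i; split => //.
  exact: leq_ltn_trans h2 (hB i).
- by move=> y hy; apply: hBO; apply: hcB.
- move=> hsub; apply: hxO; apply: hsub => i /=; rewrite ffunE; by case: (Hg i).
Qed.

End Geo.

From Stdlib Require Import FunctionalExtensionality PropExtensionality.

Section Clos.
Variables (R : realFieldType) (d : nat) (p : 'I_d -> nat) (K0 : 'I_d -> seq R).

Definition Cl (O : hier R d) (M : cell d -> Prop) (c : cell d) : Prop :=
  exists n, marks p K0 O (fun c => M c /\ in_mesh K0 O c) n c.

Lemma Cl_base O M c : M c -> in_mesh K0 O c -> Cl O M c.
Proof. by move=> h1 h2; exists 0%N. Qed.

Lemma Cl_step O M c0 c : Cl O M c0 -> bad_neighbor p K0 O c0 c -> Cl O M c.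
Proof. by move=> [n h] hb; exists n.+1; right; exists c0. Qed.

Lemma Cl_ind O M (P : cell d -> Prop) :
  (forall c, M c -> in_mesh K0 O c -> P c) ->
  (forall c0 c, Cl O M c0 -> P c0 -> bad_neighbor p K0 O c0 c -> P c) ->
  forall c, Cl O M c -> P c.
Proof.
move=> hb hs c [n]; elim: n c => [|n IH] c /=; first by case; apply: hb.
case; first exact: IH.
by case=> c0 h0 hbn; apply: (hs c0) => //; [exists n | apply: IH].
Qed.

Lemma Cl_mesh O M c : Cl O M c -> in_mesh K0 O c.
Proof. by move: c; apply: Cl_ind => // c0 c _ _ [[]]. Qed.

Lemma Cl_or O (A B : cell d -> Prop) c :
  Cl O (fun c => A c \/ B c) c <-> Cl O A c \/ Cl O B c.
Proof.
split.
- move: c; apply: Cl_ind.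
  + by move=> c [ha|hb] hm; [left|right]; apply: Cl_base.
  + by move=> c0 c _ [h|h] hb; [left|right]; apply: Cl_step hb.
- case; move: c; apply: Cl_ind.
  + by move=> c ha hm; apply: Cl_base => //; left.
  + by move=> c0 c _ h hb; apply: Cl_step hb.
  + by move=> c ha hm; apply: Cl_base => //; right.
  + by move=> c0 c _ h hb; apply: Cl_step hb.
Qed.

Lemma refineE O M : refine p K0 O M =
  fun k x => O k x \/ exists c, [/\ Cl O M c, c.1.+1 = k & cell_box K0 c x].
Proof. by []. Qed.

Lemma refine_seq_rcons O s T : refine_seq p K0 O (rcons s T) =
  refine p K0 (refine_seq p K0 O s) (fun c' => c' = T).
Proof. by rewrite /refine_seq foldl_rcons. Qed.

End Clos.

Section Key.
Variables (R : realFieldType) (d : nat) (p : 'I_d -> nat) (K0 : 'I_d -> seq R).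
Hypothesis hK : forall i, open_knots (p i) (K0 i).
Variable O : hier R d.
Hypothesis hO : hier_mesh K0 O.
Hypothesis hadm : admissible p K0 O.

Lemma O_monoS k x : O k.+1 x -> O k x.
Proof. by case: hO => _ hm _ _; apply: hm. Qed.

Lemma O_mono k m x : (k <= m)%N -> O m x -> O k x.
Proof.
elim: m => [|m IH]; first by rewrite leqn0 => /eqP ->.
rewrite leq_eqVlt => /orP[/eqP -> //| hk] h.
by apply: IH; [ | apply: O_monoS].
Qed.

Lemma supp_sub0 B : is_bspl p K0 B -> subr (supp_box p K0 B) (O 0).
Proof.
move=> hB x hx; case: hO => h0 _ _ _; apply/h0 => i.
have hBi := hB i; move: (hx i) => /andP[x1 x2].
have /andP[a1 _] := knots_01 hK (k:=B.1) (i:=i) (j:=B.2 i)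
   (leq_ltn_trans (leq_addr (p i) (B.2 i)) (ltnW hBi)).
have /andP[_ b2] := knots_01 hK (k:=B.1) (i:=i) (j:=(B.2 i + p i).+1) hBi.
apply/andP; split; [exact: le_trans a1 x1 | exact: le_trans x2 b2].
Qed.

Definition lemA_st l := forall (B n : cell d), B.1 = l -> is_bspl p K0 B -> in_mesh K0 O n ->
  (l < n.1)%N -> subr (cell_box K0 n) (supp_box p K0 B) -> subr (supp_box p K0 B) (O l).

Lemma corA_of l : lemA_st l -> forall (B n : cell d), B.1 = l -> is_bspl p K0 B ->
  in_mesh K0 O n -> (l.+1 < n.1)%N ->
  subr (cell_box K0 n) (supp_box p K0 B) -> subr (supp_box p K0 B) (O l.+1).
Proof.
move=> hA B n eB hB hn hl hnB.
case: (classic (subr (supp_box p K0 B) (O l.+1))) => // hno; exfalso.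
have hBO := hA B n eB hB hn (ltnW hl) hnB.
have [hnc _ _] := hn.
subst l.
have [c [hc ec hcB]] := cell_in_supp hK hB hnc hnB hBO hno.
have hnb : neighbor p K0 O n c.
  split => //; exists B; split => //.
have [h1 _] := hadm hn hnb.
rewrite ec in h1; lia.
Qed.

Lemma lemA l : lemA_st l.
Proof.
elim: l => [|l IH].
  by move=> B n eB hB _ _ _; apply: supp_sub0.
move=> B n eB hB hn hl hnB.
have [A [eA hA hBA]] := anc_bspl hK hB eB.
have hAO := corA_of IH eA hA hn hl (fun x hx => hBA x (hnB x hx)).
by move=> x hx; apply: hAO; apply: hBA.
Qed.

Lemma corA l (B n : cell d) : B.1 = l -> is_bspl p K0 B ->
  in_mesh K0 O n -> (l.+1 < n.1)%N ->
  subr (cell_box K0 n) (supp_box p K0 B) -> subr (supp_box p K0 B) (O l.+1).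
Proof. exact: (@corA_of l (@lemA l) B n). Qed.

Section Step.
Variables (A : cell d -> Prop) (T : cell d).
Hypothesis hT : in_mesh K0 O T.
Local Notation O1 := (refine p K0 O A).

Lemma O1_monoS k x : O1 k.+1 x -> O1 k x.
Proof.
case=> [h | [c [hc hk hx]]]; first by left; apply: O_monoS.
left; have [_ h2 _] := Cl_mesh hc.
by rewrite -(succn_inj hk); apply: h2.
Qed.

Lemma O1_mono k m x : (k <= m)%N -> O1 m x -> O1 k x.
Proof.
elim: m => [|m IH]; first by rewrite leqn0 => /eqP ->.
rewrite leq_eqVlt => /orP[/eqP -> //| hk] h.
by apply: IH; [ | apply: O1_monoS].
Qed.

Lemma C1_sub c : Cl p K0 O A c -> subr (cell_box K0 c) (O1 c.1.+1).
Proof. by move=> hc x hx; right; exists c. Qed.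

Lemma mesh_O1 c : in_mesh K0 O c -> ~ Cl p K0 O A c -> in_mesh K0 O1 c.
Proof.
move=> [hc h1 h2] hn; split => //.
  by move=> x hx; left; apply: h1.
move=> hsub; have := hsub _ (ctr_in hc); case.
- case: hO => _ _ hcs _; have [cs [Hcs1 Hcs2]] := hcs c.1.
  move/Hcs2 => [c' c'in hb]; have [hc' e'] := Hcs1 _ c'in.
  have ec := cell_eq hK hc hc' (esym e') hb; subst c'.
  by apply: h2 => y hy; apply/Hcs2; exists c.
- case=> c'' [hcl he hb].
  have [hc'' _ _] := Cl_mesh hcl.
  have ec := cell_eq hK hc hc'' (esym (succn_inj he)) hb; subst c''.
  exact: hn hcl.
Qed.

Lemma claim_ii c : Cl p K0 O1 (fun c' => c' = T) c ->
  [/\ in_mesh K0 O c, ~ Cl p K0 O A c & Cl p K0 O (fun c' => c' = T) c].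
Proof.
move: c; apply: Cl_ind.
- move=> c -> hT1; split => //; last exact: Cl_base.
  move=> hC; have [_ _ h3] := hT1; apply: h3; exact: C1_sub.
- move=> c0 c hC0 [hm0 hn0 hT0] [[hm1 [b [hb hb0 hbc]]] hlev].
  have hnc : ~ Cl p K0 O A c.
    move=> hC; have [_ _ h3] := hm1; apply: h3; exact: C1_sub.
  have [hbs hbO1 hbO1'] := hb.
  have [hc1 hc2 hc3] := hm1.
  have hl1 : (b.1 <= c.1)%N.
    rewrite leqNgt; apply/negP => hlt; apply: hc3 => x hx.
    apply: (O1_mono hlt); apply: hbO1; exact: hbc.
  have hl2 : ~ (b.1.+1 < c0.1)%N.
    move=> hlt; apply: hbO1' => x hx; left.
    exact: (corA (erefl b.1) hbs hm0 hlt hb0 hx).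
  have el : b.1 = c.1 by lia.
  have hbO : subr (supp_box p K0 b) (O b.1).
    exact: (@lemA b.1 b c0 (erefl _) hbs hm0 ltac:(lia) hb0).
  have hcO : ~ subr (cell_box K0 c) (O c.1.+1).
    by move=> h; apply: hc3 => x hx; left; apply: h.
  have hmc : in_mesh K0 O c.
    split => //; move=> x hx; rewrite -el; apply: hbO; exact: hbc.
  split => //; apply: Cl_step hT0 _; split => //; split => //.
  exists b; split => //; split => //.
  by move=> h; apply: hcO => x hx; rewrite -el; apply: h; apply: hbc.
Qed.

Lemma claim_i c : Cl p K0 O (fun c' => c' = T) c ->
  Cl p K0 O A c \/ Cl p K0 O1 (fun c' => c' = T) c.
Proof.
move: c; apply: Cl_ind.
- move=> c -> _; case: (classic (Cl p K0 O A T)) => h; [by left | right].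
  by apply: Cl_base => //; apply: mesh_O1.
- move=> c0 c hC0 [hA0 | hC0'] hbn.
  + by left; apply: Cl_step hA0 hbn.
  + case: (classic (Cl p K0 O A c)) => hAc; [by left | right].
    have [hm0 hnA0 _] := claim_ii hC0'.
    have [[hmc [b [hb hb0 hbc]]] hlev] := hbn.
    have hm1 := mesh_O1 hmc hAc.
    have [hbs hbO hbO'] := hb.
    have [_ _ hc3] := hmc.
    have hl1 : (b.1 <= c.1)%N.
      rewrite leqNgt; apply/negP => hlt; apply: hc3 => x hx.
      apply: (O_mono hlt); apply: hbO; exact: hbc.
    have hl2 : ~ (b.1.+1 < c0.1)%N.
      move=> hlt; apply: hbO' => x hx.
      exact: (corA (erefl b.1) hbs hm0 hlt hb0 hx).
    have el : b.1 = c.1 by lia.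
    apply: Cl_step hC0' _; split => //; split => //.
    exists b; split => //; split => //.
    * by move=> x hx; left; apply: hbO.
    * move=> h; have [_ _ h3] := hm1; apply: h3 => x hx; rewrite -el.
      by apply: h; apply: hbc.
Qed.

Lemma key k x : refine p K0 O1 (fun c' => c' = T) k x <->
  refine p K0 O (fun c => A c \/ c = T) k x.
Proof.
rewrite !refineE; split.
- case=> [[h|[c [hc hk hx]]] | [c [hc hk hx]]].
  + by left.
  + by right; exists c; split => //; apply/Cl_or; left.
  + right; exists c; split => //; apply/Cl_or; right; by case: (claim_ii hc).
- case=> [h | [c [hc hk hx]]]; first by left; left.
  case/Cl_or: hc => hc.
  + by left; right; exists c; split.
  + case: (claim_i hc) => hc'.
    * by left; right; exists c; split.
    * by right; exists c; split.
Qed.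

End Step.

Lemma seq_eq (s : seq (cell d)) : (forall c, c \in s -> in_mesh K0 O c) ->
  refine_seq p K0 O s = refine p K0 O (fun c' => c' \in s).
Proof.
elim/last_ind: s => [|s T IH] hs.
- apply: functional_extensionality => k; apply: functional_extensionality => x.
  apply: propositional_extensionality; rewrite refineE; split; first by left.
  case=> // [[c [hc _ _]]]; exfalso; move: c hc; exact: Cl_ind.
- rewrite refine_seq_rcons IH; last by move=> c hc; apply: hs; rewrite mem_rcons in_cons hc orbT.
  have hT : in_mesh K0 O T by apply: hs; rewrite mem_rcons mem_head.
  have -> : (fun c' : cell d => (c' \in rcons s T : Prop)) = (fun c' => c' \in s \/ c' = T).
    apply: functional_extensionality => c; apply: propositional_extensionality.
    rewrite mem_rcons in_cons; split.
    + by case/orP => [/eqP ->|->]; auto.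
    + by case=> [->|->]; rewrite ?eqxx ?orbT.
  apply: functional_extensionality => k; apply: functional_extensionality => x.
  apply: propositional_extensionality; exact: key.
Qed.
End Key.

Unset Implicit Arguments.

Theorem lemma5p4 (R : realFieldType) (d : nat) (p : 'I_d -> nat)
    (K0 : 'I_d -> seq R) (O : hier R d) (Ms : seq (cell d)) :
  (2 <= d)%N ->
  (forall i, (1 <= p i)%N) ->
  (forall i, open_knots (p i) (K0 i)) ->
  hier_mesh K0 O ->
  admissible p K0 O ->
  uniq Ms ->
  (forall c, c \in Ms -> in_mesh K0 O c) ->
  forall c : cell d,
    in_mesh K0 (refine p K0 O (fun c' => c' \in Ms)) c <->
    in_mesh K0 (refine_seq p K0 O Ms) c.
Proof.
move=> _ _ hK hO hadm _ hMs c.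
rewrite (seq_eq hK hO hadm hMs).
exact: iff_refl.
Qed.
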